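(* Let $n$ be a non-negative integer, let $x\neq 1$ be a complex number, and let $r$ be a complex number that is not a negative integer. Then $$\sum_{k = 1}^n \sum_{j = 0}^{k - 1} \frac{x^{n-j}}{k - j + r} = \frac{1}{1-x} \left(\sum_{k=1}^n \frac{x^k}{k+r} - x^{n+1}(H_{n+r} - H_r) \right).$$ In particular, $$\sum_{k = 1}^n \sum_{j = 0}^{k - 1} \frac{x^{n-j}}{k - j} = \frac{1}{1-x} \left( \sum_{k=1}^n \frac{x^k}{k} - x^{n+1} H_n \right)$$ and $$\sum_{k = 1}^n \sum_{j = 0}^{k - 1} \frac{x^{n-j}}{2k - 2j - 1} = \frac{1}{1-x} \left( \sum_{k=1}^n \frac{x^k}{2k-1} - x^{n+1} O_n \right).$$
   Context: For a complex number $z$ that is not a negative integer, $H_z=\sum_{m=1}^\infty\left(\frac1m-\frac1{m+z}\right)$ (so $H_0=0$ and $H_n=\sum_{m=1}^n\frac1m$ for non-negative integers $n$). $O_n=\sum_{m=1}^n\frac1{2m-1}$ is the odd harmonic number. Empty sums are zero. *)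

(* Defs.v *)
From Stdlib Require Import Reals.
From Coquelicot Require Import Coquelicot.
Open Scope C_scope.

(* Generalized harmonic number H_z = sum_{m>=1} (1/m - 1/(m+z)),
   defined as the limit of the partial sums (sum_n f N = f 0 + ... + f N). *)
Definition Hz (z : Complex.C) : Complex.C :=
  @lim C_CompleteNormedModule
    (filtermap (fun N : nat =>
       sum_n (fun m : nat => (/ RtoC (INR (S m)) - / (RtoC (INR (S m)) + z))%C) N)
       eventually).

Definition On (n : nat) : Complex.C :=
  sum_n_m (fun m : nat => / (2 * RtoC (INR m) - 1)) 1 n.

Definition is_neg_int (z : Complex.C) : Prop :=
  exists k : nat, z = - RtoC (INR (S k)).

(* Main.v *)
From Stdlib Require Import Reals Lra Lia ZArith.
From Coquelicot Require Import Coquelicot.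
Require Import Defs.

Lemma tele_sum {K : AbsRing} {V : NormedModule K} (c : nat -> V) n :
  sum_n (fun m => minus (c m) (c (S m))) n = minus (c 0%nat) (c (S n)).
Proof.
  induction n as [|n IH].
  - now rewrite sum_O.
  - rewrite sum_Sn, IH. unfold minus.
    rewrite <- plus_assoc. f_equal. rewrite plus_assoc, plus_opp_l, plus_zero_l. reflexivity.
Qed.

Lemma minus_aux {K : AbsRing} {V : NormedModule K} (a b : V) :
  norm (minus (minus a b) a) = norm b.
Proof.
  rewrite <- (norm_opp b). f_equal.
  unfold minus. rewrite (plus_comm a). rewrite <- plus_assoc. rewrite (plus_opp_r (G:=NormedModule.AbelianGroup K V)). apply plus_zero_r.
Qed.

Lemma tele {K : AbsRing} {V : NormedModule K} (c : nat -> V) :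
  (forall eps : posreal, exists N, forall n, (N <= n)%nat -> norm (c n) < eps) ->
  is_series (fun m => minus (c m) (c (S m))) (c 0%nat).
Proof.
  intros H. unfold is_series. apply filterlim_locally. intros eps.
  destruct (H eps) as [N HN]. exists N. intros n Hn.
  replace (sum_n _ n) with (minus (c 0%nat) (c (S n))) by (symmetry; apply (tele_sum (K:=K))).
  apply norm_compat1.
  eapply Rle_lt_trans; [apply Req_le, minus_aux | apply HN; lia].
Qed.

Lemma arch (x : R) : exists N : nat, x < INR N.
Proof.
  destruct (archimed x) as [H1 _].
  destruct (Z_lt_le_dec (up x) 0) as [Hn|Hp].
  - exists 0%nat. simpl. apply IZR_lt in Hn. lra.
  - exists (Z.to_nat (up x)). rewrite INR_IZR_INZ, Z2Nat.id by exact Hp. exact H1.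
Qed.

Lemma Cmod_shift (t : R) (w : C) : 0 <= t -> (t - Cmod w <= Cmod (RtoC t + w)%C)%R.
Proof.
  intros Ht.
  assert (E : RtoC t = ((RtoC t + w) + - w)%C) by ring.
  assert (H := Cmod_triangle (RtoC t + w) (- w)).
  rewrite <- E, Cmod_opp, Cmod_R, Rabs_pos_eq in H by exact Ht. lra.
Qed.

Lemma inv_to0 (z : C) (eps : posreal) : exists N, forall n, (N <= n)%nat ->
  (Cmod (/ (RtoC (INR n) + z))%C < eps)%R.
Proof.
  destruct (arch (Cmod z + / eps + 1)) as [N HN].
  exists N. intros n Hn.
  apply le_INR in Hn.
  assert (H := Cmod_shift (INR n) z (pos_INR n)).
  assert (Hp : 0 < / eps) by (apply Rinv_0_lt_compat, cond_pos).
  assert (Hnz : (RtoC (INR n) + z <> 0)%C).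
  { intros E. rewrite E, Cmod_0 in H. lra. }
  rewrite Cmod_inv by exact Hnz.
  assert (Hlt : / eps < Cmod (RtoC (INR n) + z)%C) by lra.
  apply Rinv_lt_contravar in Hlt; [| apply Rmult_lt_0_compat; lra].
  rewrite Rinv_inv in Hlt. exact Hlt.
Qed.

Open Scope C_scope.

Lemma RtoC_nz (t : R) : (0 < t)%R -> RtoC t <> 0.
Proof. intros Ht E. apply (f_equal fst) in E. simpl in E. lra. Qed.

Lemma term_bound (z : C) (m : nat) :
  (2 * Cmod z + 1 <= INR m)%R ->
  (Cmod (/ RtoC (INR (S m)) - / (RtoC (INR (S m)) + z))
   <= 4 * Cmod z * (/ (INR m + 1) - / (INR (S m) + 1)))%R.
Proof.
  intros Hm. assert (Hz0 := Cmod_ge_0 z). rewrite S_INR. set (t := (INR m + 1)%R).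
  assert (Ht : (1 <= t)%R) by (unfold t; lra).
  assert (Ht2 : (2 * Cmod z + 2 <= t)%R) by (unfold t; lra).
  assert (Hd := Cmod_shift t z ltac:(lra)).
  assert (Hd2 : (t / 2 <= Cmod (RtoC t + z))%R) by lra.
  assert (Hnz : RtoC t + z <> 0).
  { intros E. rewrite E, Cmod_0 in Hd2. lra. }
  assert (Htnz : RtoC t <> 0) by (apply RtoC_nz; lra).
  replace (/ RtoC t - / (RtoC t + z)) with (z / (RtoC t * (RtoC t + z))) by (field; auto).
  rewrite Cmod_div by (apply Cmult_neq_0; auto).
  rewrite Cmod_mult, Cmod_R, Rabs_pos_eq by lra.
  set (d := Cmod (RtoC t + z)) in *.
  replace (4 * Cmod z * (/ t - / (t + 1)))%R with (Cmod z * / (t * (t + 1) / 4))%R by (field; lra).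
  unfold Rdiv at 1. apply Rmult_le_compat_l; [apply Cmod_ge_0|].
  assert (t * (t / 2) <= t * d)%R by (apply Rmult_le_compat_l; lra).
  apply Rinv_le_contravar; [nra| nra].
Qed.

Definition aa (z : C) (m : nat) : C := (/ RtoC (INR (S m)) - / (RtoC (INR (S m)) + z))%C.

Lemma real_tail (A : R) (N : nat) : (0 <= A)%R ->
  ex_series (fun k => A * (/ (INR (N + k) + 1) - / (INR (S (N + k)) + 1)))%R.
Proof.
  intros HA.
  set (c := fun k => (A * / (INR (N + k) + 1))%R).
  exists (c 0%nat).
  eapply is_series_ext; [| apply (tele (K:=R_AbsRing) (V:=R_NormedModule) c)].
  { intros k. unfold c. rewrite <- plus_n_Sm, !S_INR. unfold minus, plus, opp. simpl. ring. }
  intros eps.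
  destruct (arch (A / eps)) as [N1 HN1]. exists N1. intros n Hn.
  apply le_INR in Hn.
  assert (HD : (0 < INR (N + n) + 1)%R) by (generalize (pos_INR (N+n)); lra).
  assert (HD2 : (INR n <= INR (N + n))%R) by (apply le_INR; lia).
  unfold norm. simpl. unfold abs. simpl. unfold c.
  rewrite Rabs_pos_eq by (apply Rmult_le_pos; [lra| apply Rlt_le, Rinv_0_lt_compat; lra]).
  apply (Rmult_lt_reg_r (INR (N + n) + 1)); [lra|].
  rewrite Rmult_assoc, Rinv_l, Rmult_1_r by lra.
  assert (Heps := cond_pos eps).
  assert (A < eps * INR N1)%R.
  { apply (Rmult_lt_reg_r (/ eps)); [apply Rinv_0_lt_compat; lra|].
    replace (eps * INR N1 * / eps)%R with (INR N1) by (field; lra). exact HN1. }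
  nra.
Qed.

Lemma aa_conv (z : C) : ex_series (aa z).
Proof.
  destruct (arch (2 * Cmod z + 1)) as [N HN].
  apply (ex_series_incr_n _ N).
  apply (ex_series_le (K:=C_AbsRing) (V:=C_CompleteNormedModule) _ (fun k => 4 * Cmod z * (/ (INR (N + k) + 1) - / (INR (S (N + k)) + 1)))%R).
  - intros k. replace (norm _) with (Cmod (aa z (N + k))) by reflexivity.
    apply term_bound. assert (INR N <= INR (N + k))%R by (apply le_INR; lia). lra.
  - apply real_tail. generalize (Cmod_ge_0 z). lra.
Qed.

Lemma Hz_lim (z l : C) : is_series (aa z) l -> Hz z = l.
Proof.
  intros Hl. unfold Hz.
  set (F := filtermap (fun N : nat => sum_n (fun m : nat => (/ RtoC (INR (S m)) - / (RtoC (INR (S m)) + z))%C) N) eventually).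
  assert (PF : ProperFilter F) by (apply filtermap_proper_filter, eventually_filter).
  assert (Hc : @cauchy C_CompleteNormedModule F).
  { intros eps. exists l. apply (proj1 (filterlim_locally _ _) Hl eps). }
  assert (H1 := @complete_cauchy C_CompleteNormedModule F PF Hc).
  assert (L1 : is_filter_lim (T:=C_NormedModule) F (@lim C_CompleteNormedModule F)).
  { intros P [eps HP]. apply (filter_imp (F:=F) _ _ HP). apply H1. }
  assert (L2 : is_filter_lim (T:=C_NormedModule) F l) by exact Hl.
  exact (is_filter_lim_unique (K:=C_AbsRing) (V:=C_NormedModule) (F:=F) _ _ L1 L2).
Qed.

Lemma Hz_series (z : C) : is_series (aa z) (Hz z).
Proof.
  destruct (aa_conv z) as [l Hl]. rewrite (Hz_lim z l Hl). exact Hl.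
Qed.

Lemma Hz_step (z : C) : Hz (z + 1) = Hz z + / (RtoC (INR 1) + z).
Proof.
  set (c := fun m : nat => / (RtoC (INR (S m)) + z)).
  assert (T : is_series (fun m => minus (c m) (c (S m))) (c 0%nat)).
  { apply (tele (K:=C_AbsRing) (V:=C_NormedModule) c). intros eps.
    destruct (inv_to0 z eps) as [N HN]. exists N. intros n Hn.
    change (Cmod (c n) < eps)%R. unfold c. apply HN. lia. }
  assert (M := is_series_minus _ _ _ _ (Hz_series (z + 1)) (Hz_series z)).
  assert (E : forall n, plus (aa (z + 1) n) (opp (aa z n)) = minus (c n) (c (S n))).
  { intros n. unfold aa, c.
    replace (RtoC (INR (S n)) + (z + 1)) with (RtoC (INR (S (S n))) + z).
    - set (u := RtoC (INR (S n))). set (v := RtoC (INR (S (S n)))).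
      unfold minus, plus, opp. simpl. ring.
    - rewrite (S_INR (S n)), RtoC_plus. ring. }
  apply (is_series_ext _ _ _ E) in M.
  assert (U := filterlim_locally_unique (F:=eventually) _ _ _ M T).
  unfold c in U. rewrite <- U. unfold plus, opp. simpl. ring.
Qed.

Lemma plusC (a b : C) : plus a b = a + b.
Proof. reflexivity. Qed.

Lemma sum0 (f : nat -> C) : sum_n_m f 1 0 = RtoC 0.
Proof. rewrite sum_n_m_zero by lia. reflexivity. Qed.

Lemma Hz_diff (r : C) (n : nat) :
  Hz (RtoC (INR n) + r) - Hz r = sum_n_m (fun k => / (RtoC (INR k) + r)) 1 n.
Proof.
  induction n as [|n IH].
  - rewrite sum0. simpl. replace (RtoC 0 + r) with r by ring. ring.
  - rewrite sum_n_Sm by lia. rewrite <- IH. change (plus ?a ?b) with (Cplus a b).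
    assert (HS : Hz (RtoC (INR (S n)) + r) = Hz (RtoC (INR n) + r) + / (RtoC (INR (S n)) + r)).
    { replace (RtoC (INR (S n)) + r) with ((RtoC (INR n) + r) + 1)
        by (rewrite S_INR, RtoC_plus; ring).
      rewrite Hz_step. f_equal. f_equal. rewrite !S_INR, !RtoC_plus. simpl. ring. }
    rewrite HS. ring.
Qed.

Lemma sum_rev (f : nat -> C) (n : nat) :
  sum_n_m (fun j => f (S n - j)%nat) 0 n = sum_n_m f 1 (S n).
Proof.
  induction n as [|n IH].
  - rewrite !sum_n_n. reflexivity.
  - rewrite sum_Sn_m by lia. rewrite <- sum_n_m_S.
    replace (sum_n_m (fun j => f (S (S n) - S j)%nat) 0 n) with (sum_n_m (fun j => f (S n - j)%nat) 0 n)
      by (apply sum_n_m_ext; intros; f_equal).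
    rewrite IH. rewrite (sum_n_Sm f 1 (S n)) by lia.
    replace (S (S n) - 0)%nat with (S (S n)) by lia. apply plus_comm.
Qed.

Lemma CpowS (x : C) (m : nat) : Cpow x (S m) = x * Cpow x m.
Proof. reflexivity. Qed.

Lemma sum_mult_C (a : C) (u : nat -> C) (n m : nat) :
  a * sum_n_m u n m = sum_n_m (fun k => a * u k) n m.
Proof. symmetry. apply (sum_n_m_mult_l (K:=C_Ring)). Qed.

Lemma alg (x y L A B t : C) : (1 - x) * L = A - x * y * B ->
  (1 - x) * (x * L + (A + x * y * t)) = A + x * y * t - x * (x * y) * (B + t).
Proof.
  intros H.
  replace ((1 - x) * (x * L + (A + x * y * t))) with (x * ((1 - x) * L) + (1 - x) * (A + x * y * t)) by ring.
  rewrite H. ring.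
Qed.

Lemma main_fin (x : C) (c : nat -> C) (n : nat) :
  (1 - x) * sum_n_m (fun k => sum_n_m (fun j => Cpow x (n - j) * c (k - j)%nat) 0 (k - 1)) 1 n
  = sum_n_m (fun k => Cpow x k * c k) 1 n - Cpow x (S n) * sum_n_m c 1 n.
Proof.
  induction n as [|n IH].
  - rewrite !sum0. ring.
  - assert (E1 : sum_n_m (fun k => sum_n_m (fun j => Cpow x (S n - j) * c (k - j)%nat) 0 (k - 1)) 1 n
        = x * sum_n_m (fun k => sum_n_m (fun j => Cpow x (n - j) * c (k - j)%nat) 0 (k - 1)) 1 n).
    { rewrite sum_mult_C. apply sum_n_m_ext_loc. intros k Hk.
      rewrite sum_mult_C. apply sum_n_m_ext_loc. intros j Hj.
      replace (S n - j)%nat with (S (n - j)) by lia. rewrite CpowS. symmetry. apply Cmult_assoc. }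
    assert (E2 : sum_n_m (fun j => Cpow x (S n - j) * c (S n - j)%nat) 0 (S n - 1)
        = sum_n_m (fun i => Cpow x i * c i) 1 (S n)).
    { replace (S n - 1)%nat with n by lia. apply (sum_rev (fun i => Cpow x i * c i) n). }
    rewrite (sum_n_Sm _ 1 n) by lia.
    rewrite E1, E2.
    rewrite !(sum_n_Sm _ 1 n) by lia.
    change (plus ?a ?b) with (Cplus a b).
    set (L := sum_n_m (fun k => sum_n_m (fun j => Cpow x (n - j) * c (k - j)%nat) 0 (k - 1)) 1 n) in *.
    set (A := sum_n_m (fun k => Cpow x k * c k) 1 n) in *.
    set (B := sum_n_m c 1 n) in *.
    rewrite !CpowS in *.
    apply alg. exact IH.
Qed.

Lemma finish (x : C) (c : nat -> C) (n : nat) : x <> RtoC 1 ->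
  sum_n_m (fun k => sum_n_m (fun j => Cpow x (n - j) * c (k - j)%nat) 0 (k - 1)) 1 n
  = / (1 - x) * (sum_n_m (fun k => Cpow x k * c k) 1 n - Cpow x (S n) * sum_n_m c 1 n).
Proof.
  intros hx. rewrite <- main_fin. rewrite Cmult_assoc, Cinv_l, Cmult_1_l; [reflexivity|].
  intros E. apply hx. transitivity (1 - (1 - x)); [ring | rewrite E; ring].
Qed.

Lemma ext_L (x : C) (n : nat) (f : nat -> nat -> C) (c : nat -> C) :
  (forall k j, (1 <= k)%nat -> (j <= k - 1)%nat -> f k j = Cpow x (n - j) * c (k - j)%nat) ->
  sum_n_m (fun k => sum_n_m (fun j => f k j) 0 (k - 1)) 1 n
  = sum_n_m (fun k => sum_n_m (fun j => Cpow x (n - j) * c (k - j)%nat) 0 (k - 1)) 1 n.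
Proof.
  intros H. apply sum_n_m_ext_loc. intros k Hk. apply sum_n_m_ext_loc. intros j Hj.
  apply H; lia.
Qed.

Lemma RINR_sub (k j : nat) : (j <= k)%nat -> RtoC (INR (k - j)) = RtoC (INR k) - RtoC (INR j).
Proof. intros H. rewrite minus_INR by exact H. apply RtoC_minus. Qed.

Lemma Csub0 (a : C) : a - 0 = a.
Proof. ring. Qed.

Lemma Hz0 : Hz 0 = 0.
Proof.
  apply Hz_lim.
  eapply is_series_ext; [| apply (tele (K:=C_AbsRing) (V:=C_NormedModule) (fun _ => RtoC 0))].
  - intros m. unfold aa. rewrite Cplus_0_r. unfold minus, plus, opp. simpl. ring.
  - intros eps. exists 0%nat. intros n _. change (Cmod 0 < eps)%R. rewrite Cmod_0. apply cond_pos.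
Qed.

Theorem proposition8 (n : nat) (x : Complex.C) (hx : x <> RtoC 1) :
  (forall r : Complex.C, ~ is_neg_int r ->
     sum_n_m (fun k : nat =>
       sum_n_m (fun j : nat =>
         Cpow x (n - j) / (RtoC (INR k) - RtoC (INR j) + r)) 0 (k - 1)) 1 n
     = / (1 - x) *
       (sum_n_m (fun k : nat => Cpow x k / (RtoC (INR k) + r)) 1 n
        - Cpow x (S n) * (Hz (RtoC (INR n) + r) - Hz r)))
  /\
  sum_n_m (fun k : nat =>
    sum_n_m (fun j : nat =>
      Cpow x (n - j) / (RtoC (INR k) - RtoC (INR j))) 0 (k - 1)) 1 n
  = / (1 - x) *
    (sum_n_m (fun k : nat => Cpow x k / RtoC (INR k)) 1 n
     - Cpow x (S n) * Hz (RtoC (INR n)))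
  /\
  sum_n_m (fun k : nat =>
    sum_n_m (fun j : nat =>
      Cpow x (n - j) / (2 * RtoC (INR k) - 2 * RtoC (INR j) - 1)) 0 (k - 1)) 1 n
  = / (1 - x) *
    (sum_n_m (fun k : nat => Cpow x k / (2 * RtoC (INR k) - 1)) 1 n
     - Cpow x (S n) * On n).
Proof.
  split; [| split].
  - intros r _.
    etransitivity; [apply (ext_L x n _ (fun i => / (RtoC (INR i) + r))) |].
    + intros k j Hk Hj. rewrite RINR_sub by lia. reflexivity.
    + rewrite Hz_diff. exact (finish x (fun i => / (RtoC (INR i) + r)) n hx).
  - etransitivity; [apply (ext_L x n _ (fun i => / RtoC (INR i))) |].
    + intros k j Hk Hj. rewrite RINR_sub by lia. reflexivity.
    + assert (HH := Hz_diff 0 n). rewrite Hz0, Cplus_0_r in HH.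
      replace (Hz (RtoC (INR n))) with (sum_n_m (fun k => / RtoC (INR k)) 1 n).
      * exact (finish x (fun i => / RtoC (INR i)) n hx).
      * transitivity (Hz (RtoC (INR n)) - 0); [| apply Csub0]. rewrite HH.
        apply sum_n_m_ext_loc. intros k _. rewrite Cplus_0_r. reflexivity.
  - etransitivity; [apply (ext_L x n _ (fun i => / (2 * RtoC (INR i) - 1))) |].
    + intros k j Hk Hj. rewrite RINR_sub by lia. unfold Cdiv. f_equal. f_equal. ring.
    + exact (finish x (fun i => / (2 * RtoC (INR i) - 1)) n hx).
Qed.
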